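(* Let $(P,\cdot)$ be a strong order-preserving partial action of a monoid $T$ on a poset $P$. Then there is a globalisation $(\iota,\mathbf{P},\diamond)$ of $(P,\cdot)$ such that $\mathbf{P}$ is a poset, $\iota:P\to\mathbf{P}$ is an order-embedding whose image $P\iota$ is an order ideal of $\mathbf{P}$, and $(\mathbf{P},\diamond)$ is an order-preserving (total) action of $T$.
   Context: A partial action of a monoid $T$ on a set $X$ is a partial map $T\times X\to X$, $(t,x)\mapsto t\cdot x$, such that $1\cdot x$ is defined and equals $x$ for all $x$, and whenever $t\cdot x$ and $s\cdot(t\cdot x)$ are defined, $st\cdot x$ is defined and $s\cdot(t\cdot x)=st\cdot x$. It is an action if $t\cdot x$ is always defined. It is strong if whenever $t\cdot x$ and $st\cdot x$ are defined, $s\cdot(t\cdot x)$ is defined. A (partial) action on a poset is order-preserving if whenever $x\le y$ and $t\cdot y$ is defined, $t\cdot x$ is defined and $t\cdot x\le t\cdot y$. A globalisation of a partial action $(X,\cdot)$ of $T$ is a triple $(\iota,\mathbf{X},\ast)$ with $\iota:X\to\mathbf{X}$ injective and $(\mathbf{X},\ast)$ an action of $T$ such that for all $t\in T$, $x\in X$: $t\cdot x$ is defined iff $t\ast x\iota\in X\iota$, and in that case $(t\cdot x)\iota=t\ast x\iota$. An order ideal of a poset is a down-closed subset. *)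

(* Defs.v *)
From Stdlib Require Import Relations.

Record is_monoid (T : Type) (mul : T -> T -> T) (one : T) : Prop := {
  mon_assoc : forall a b c, mul a (mul b c) = mul (mul a b) c;
  mon_one_l : forall a, mul one a = a;
  mon_one_r : forall a, mul a one = a }.

Record is_poset (X : Type) (le : X -> X -> Prop) : Prop := {
  po_refl : forall x, le x x;
  po_antisym : forall x y, le x y -> le y x -> x = y;
  po_trans : forall x y z, le x y -> le y z -> le x z }.

(* Partial action: act t x = Some y  means  t . x is defined and equals y. *)
Definition is_partial_action {T X : Type} (mul : T -> T -> T) (one : T)
  (act : T -> X -> option X) : Prop :=
  (forall x, act one x = Some x) /\
  (forall s t x y z, act t x = Some y -> act s y = Some z -> act (mul s t) x = Some z).

Definition is_strong {T X : Type} (mul : T -> T -> T) (act : T -> X -> option X) : Prop :=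
  forall s t x y w, act t x = Some y -> act (mul s t) x = Some w ->
    exists z, act s y = Some z.

Definition order_preserving_pact {T X : Type} (le : X -> X -> Prop)
  (act : T -> X -> option X) : Prop :=
  forall t x y y', le x y -> act t y = Some y' ->
    exists x', act t x = Some x' /\ le x' y'.

Definition is_action {T X : Type} (mul : T -> T -> T) (one : T) (act : T -> X -> X) : Prop :=
  (forall x, act one x = x) /\ (forall s t x, act s (act t x) = act (mul s t) x).

Definition order_preserving_action {T X : Type} (le : X -> X -> Prop) (act : T -> X -> X) : Prop :=
  forall t x y, le x y -> le (act t x) (act t y).

Definition is_globalisation {T X XX : Type} (mul : T -> T -> T) (one : T)
  (act : T -> X -> option X) (iota : X -> XX) (gact : T -> XX -> XX) : Prop :=
  (forall x y, iota x = iota y -> x = y) /\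
  is_action mul one gact /\
  (forall t x, (exists y, act t x = Some y) <-> (exists y, gact t (iota x) = iota y)) /\
  (forall t x y, act t x = Some y -> iota y = gact t (iota x)).

Definition order_embedding {X Y : Type} (leX : X -> X -> Prop) (leY : Y -> Y -> Prop)
  (f : X -> Y) : Prop := forall x y, leX x y <-> leY (f x) (f y).

Definition order_ideal {Y : Type} (leY : Y -> Y -> Prop) (A : Y -> Prop) : Prop :=
  forall a b, A b -> leY a b -> A a.

(* Main.v *)
Require Import Defs.
From Stdlib Require Import FunctionalExtensionality ProofIrrelevance.

Section Glob.
Variables (T : Type) (mul : T -> T -> T) (one : T) (P : Type) (le : P -> P -> Prop)
  (act : T -> P -> option P).

Definition inPP (g : T -> option P) : Prop :=
  exists u x, forall t, g t = act (mul t u) x.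

Definition PP := {g : T -> option P | inPP g}.

Definition lePP (f g : PP) : Prop :=
  forall t b, proj1_sig g t = Some b -> exists a, proj1_sig f t = Some a /\ le a b.

Lemma PP_eq (f g : PP) : (forall t, proj1_sig f t = proj1_sig g t) -> f = g.
Proof.
  destruct f as [f Hf], g as [g Hg]; simpl; intro H.
  assert (f = g) by (apply functional_extensionality; exact H). subst g.
  f_equal; apply proof_irrelevance.
Qed.

Hypothesis Hm : is_monoid T mul one.

Lemma inPP_iota x : inPP (fun t => act t x).
Proof. exists one, x; intro t; rewrite (mon_one_r _ _ _ Hm); reflexivity. Qed.

Definition iota x : PP := exist _ (fun t => act t x) (inPP_iota x).

Lemma inPP_gact s (g : PP) : inPP (fun t => proj1_sig g (mul t s)).
Proof.
  destruct g as [g [u [x Hg]]]; simpl. exists (mul s u), x. intro t.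
  rewrite Hg, (mon_assoc _ _ _ Hm); reflexivity.
Qed.

Definition gact s (g : PP) : PP := exist _ (fun t => proj1_sig g (mul t s)) (inPP_gact s g).

Hypothesis Hpa : is_partial_action mul one act.
Hypothesis Hs : is_strong mul act.

Lemma keyL u x a : act u x = Some a -> forall t, act (mul t u) x = act t a.
Proof.
  intros Ha t. destruct (act t a) as [z|] eqn:E.
  - exact (proj2 Hpa _ _ _ _ _ Ha E).
  - destruct (act (mul t u) x) as [w|] eqn:E2; [|reflexivity].
    destruct (Hs _ _ _ _ _ Ha E2) as [z Hz]. congruence.
Qed.

End Glob.

Theorem mainTheorem4 (T : Type) (mul : T -> T -> T) (one : T)
  (P : Type) (le : P -> P -> Prop) (act : T -> P -> option P) :
  is_monoid T mul one ->
  is_poset P le ->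
  is_partial_action mul one act ->
  is_strong mul act ->
  order_preserving_pact le act ->
  exists (PP : Type) (lePP : PP -> PP -> Prop) (iota : P -> PP) (gact : T -> PP -> PP),
    is_globalisation mul one act iota gact /\
    is_poset PP lePP /\
    order_embedding le lePP iota /\
    order_ideal lePP (fun b => exists x, b = iota x) /\
    order_preserving_action lePP gact.
Proof.
  intros Hm Hpo Hpa Hs Hop.
  exists (PP T mul P act), (lePP T mul P le act), (iota T mul one P act Hm),
    (gact T mul one P act Hm).
  assert (Hone : forall x, act one x = Some x) by apply Hpa.
  split; [|split; [|split; [|split]]].
  - split; [|split; [|split]].
    + intros x y H. apply (f_equal (fun g => proj1_sig g one)) in H. simpl in H.
      rewrite !Hone in H. congruence.
    + split.
      * intro g. apply PP_eq. intro t. simpl. rewrite (mon_one_r _ _ _ Hm). reflexivity.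
      * intros s t g. apply PP_eq. intro r. simpl. rewrite (mon_assoc _ _ _ Hm). reflexivity.
    + intros t x. split.
      * intros [y Hy]. exists y. apply PP_eq. intro r. simpl.
        apply (keyL T mul one P act Hpa Hs t x y Hy).
      * intros [y Hy]. apply (f_equal (fun g => proj1_sig g one)) in Hy. simpl in Hy.
        rewrite (mon_one_l _ _ _ Hm), Hone in Hy. eauto.
    + intros t x y Hy. apply PP_eq. intro r. simpl.
      symmetry. apply (keyL T mul one P act Hpa Hs t x y Hy).
  - split.
    + intros f t b H. exists b. split; [exact H|apply (po_refl _ _ Hpo)].
    + intros f g H1 H2. apply PP_eq. intro t.
      destruct (proj1_sig f t) as [a|] eqn:Ea; destruct (proj1_sig g t) as [b|] eqn:Eb.
      * destruct (H1 t b Eb) as [a' [Ha' Hle1]]. destruct (H2 t a Ea) as [b' [Hb' Hle2]].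
        rewrite Ha' in Ea. rewrite Hb' in Eb. injection Ea as ->. injection Eb as ->.
        f_equal. apply (po_antisym _ _ Hpo); assumption.
      * destruct (H2 t a Ea) as [b' [Hb' _]]. congruence.
      * destruct (H1 t b Eb) as [a' [Ha' _]]. congruence.
      * reflexivity.
    + intros f g h H1 H2 t c Hc. destruct (H2 t c Hc) as [b [Hb Hbc]].
      destruct (H1 t b Hb) as [a [Ha Hab]]. exists a. split; [exact Ha|].
      exact (po_trans _ _ Hpo _ _ _ Hab Hbc).
  - intros x y. split.
    + intros Hxy t b Hb. simpl in *. exact (Hop t x y b Hxy Hb).
    + intros H. destruct (H one y) as [a [Ha Hle]]; simpl; [apply Hone|].
      simpl in Ha. rewrite Hone in Ha. injection Ha as ->. exact Hle.
  - intros g f [y ->] Hle.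
    destruct g as [g [u [x Hg]]].
    destruct (Hle one y) as [a [Ha _]]; [simpl; apply Hone|].
    simpl in Ha. rewrite Hg, (mon_one_l _ _ _ Hm) in Ha.
    exists a. apply PP_eq. intro t. simpl. rewrite Hg.
    apply (keyL T mul one P act Hpa Hs u x a Ha).
  - intros t f g H r b Hb. simpl in *. exact (H (mul r t) b Hb).
Qed.
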